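(* Let $a_1,\dots,a_d$ be positive integers with $\gcd(a_1,\dots,a_d)=1$ and let $N$ be a positive integer. Let $\mathcal M$ be a maximal element (for inclusion) of $\mathfrak M$ with $0\in\mathcal M$, and let $i\in\{0,\dots,N-1\}$. Then $\mathcal M$ contains an element congruent to $i$ modulo $N$.
   Context: $\mathcal S_+=\{N+\sum_ic_ia_i: c_i\in\mathbb Z_{\ge0}\}$, $\mathcal S_-=-\mathcal S_+$, $\mathcal S=\mathcal S_+\cup\mathcal S_-$, and $\mathfrak M=\{\mathcal M\subset\mathbb Z:\ m,m'\in\mathcal M\Rightarrow m-m'\notin\mathcal S\}$, partially ordered by inclusion. *)

(* Defs.v *)
From Stdlib Require Import ZArith.
Open Scope Z_scope.

Fixpoint zsum (n : nat) (f : nat -> Z) : Z :=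
  match n with O => 0 | S k => zsum k f + f k end.

Fixpoint zgcd (n : nat) (a : nat -> Z) : Z :=
  match n with O => 0 | S k => Z.gcd (zgcd k a) (a k) end.

(* The generators a_1..a_d are a 0, ..., a (d-1). *)
Definition S_plus (N : Z) (d : nat) (a : nat -> Z) (x : Z) : Prop :=
  exists c : nat -> Z, (forall i, (i < d)%nat -> 0 <= c i) /\
    x = N + zsum d (fun i => c i * a i).

Definition S_minus (N : Z) (d : nat) (a : nat -> Z) (x : Z) : Prop :=
  S_plus N d a (- x).

Definition S_set (N : Z) (d : nat) (a : nat -> Z) (x : Z) : Prop :=
  S_plus N d a x \/ S_minus N d a x.

Definition in_frakM (N : Z) (d : nat) (a : nat -> Z) (M : Z -> Prop) : Prop :=
  forall m m', M m -> M m' -> ~ S_set N d a (m - m').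

Definition maximal_frakM (N : Z) (d : nat) (a : nat -> Z) (M : Z -> Prop) : Prop :=
  in_frakM N d a M /\
  forall M' : Z -> Prop, in_frakM N d a M' -> (forall x, M x -> M' x) ->
    forall x, M' x -> M x.

(* Main.v *)
Require Import Defs.
From Stdlib Require Import ZArith Znumtheory Lia Classical.
Open Scope Z_scope.

Lemma zsum_ext n f g : (forall j, (j < n)%nat -> f j = g j) -> zsum n f = zsum n g.
Proof. induction n; simpl; intros H; auto. rewrite IHn by (intros; apply H; lia). rewrite H by lia. reflexivity. Qed.

Lemma zsum_add n f g : zsum n (fun j => f j + g j) = zsum n f + zsum n g.
Proof. induction n; simpl; lia. Qed.

Lemma zsum_mul n k f : zsum n (fun j => k * f j) = k * zsum n f.
Proof. induction n; simpl; lia. Qed.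

Lemma zsum_nonneg n f : (forall j, (j < n)%nat -> 0 <= f j) -> 0 <= zsum n f.
Proof. induction n; simpl; intros H; auto. lia. pose proof (H n ltac:(lia)). assert (0 <= zsum n f) by (apply IHn; intros; apply H; lia). lia. Qed.

Lemma bez (a : nat -> Z) n : exists u : nat -> Z, zsum n (fun j => u j * a j) = zgcd n a.
Proof.
  induction n.
  - exists (fun _ => 0). reflexivity.
  - destruct IHn as [u Hu]. simpl.
    destruct (Zis_gcd_bezout _ _ _ (Zgcd_is_gcd (zgcd n a) (a n))) as [p q Hpq].
    exists (fun j => if Nat.ltb j n then p * u j else q).
    rewrite Nat.ltb_irrefl.
    rewrite (zsum_ext n _ (fun j => p * (u j * a j))).
    + rewrite zsum_mul, Hu. lia.
    + intros j Hj. apply Nat.ltb_lt in Hj. rewrite Hj. ring.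
Qed.

Definition sg (d : nat) (a : nat -> Z) (x : Z) : Prop :=
  exists c : nat -> Z, (forall i, (i < d)%nat -> 0 <= c i) /\
    x = zsum d (fun i => c i * a i).

Lemma sg_nonneg d a x : (forall j, (j < d)%nat -> 0 < a j) -> sg d a x -> 0 <= x.
Proof. intros Ha [c [Hc ->]]. apply zsum_nonneg. intros j Hj. specialize (Ha j Hj). specialize (Hc j Hj). nia. Qed.

Lemma sg_add d a x y : sg d a x -> sg d a y -> sg d a (x + y).
Proof.
  intros [c [Hc ->]] [e [He ->]]. exists (fun j => c j + e j). split.
  - intros j Hj. specialize (Hc j Hj). specialize (He j Hj). lia.
  - rewrite <- zsum_add. apply zsum_ext. intros; ring.
Qed.

Lemma sg_res d a N r : 0 < N -> zgcd d a = 1 -> exists x, sg d a x /\ x mod N = r mod N.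
Proof.
  intros HN Hg. destruct (bez a d) as [u Hu]. rewrite Hg in Hu.
  exists (r mod N * zsum d (fun j => (u j mod N) * a j)). split.
  - exists (fun j => r mod N * (u j mod N)). split.
    + intros j _. pose proof (Z.mod_pos_bound r N HN). pose proof (Z.mod_pos_bound (u j) N HN). nia.
    + rewrite <- zsum_mul. apply zsum_ext. intros; ring.
  - rewrite (zsum_ext d _ (fun j => u j * a j + N * (- (u j / N) * a j))).
    + rewrite zsum_add, zsum_mul, Hu.
      rewrite Z.mul_add_distr_l, Z.mul_1_r.
      replace (r mod N * (N * zsum d (fun j => - (u j / N) * a j))) with
        ((r mod N * zsum d (fun j => - (u j / N) * a j)) * N) by ring.
      rewrite Z.mod_add by lia. apply Z.mod_mod. lia.
    + intros j _. pose proof (Z.div_mod (u j) N ltac:(lia)).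
      rewrite (Z.mod_eq (u j) N) by lia. ring.
Qed.

Lemma transition (P : Z -> Prop) (x0 N : Z) : forall T : nat,
  P x0 -> ~ P (x0 + Z.of_nat T * N) ->
  exists t : Z, P (x0 + t * N) /\ ~ P (x0 + (t + 1) * N).
Proof.
  induction T; intros H0 HT.
  - simpl in HT. exfalso. apply HT. rewrite Z.add_0_r. exact H0.
  - destruct (classic (P (x0 + Z.of_nat T * N))) as [HP | HP].
    + exists (Z.of_nat T). split; auto. rewrite Nat2Z.inj_succ in HT.
      unfold Z.succ in HT. exact HT.
    + apply IHT; auto.
Qed.

Lemma Splus_sg N d a x : S_plus N d a x <-> sg d a (x - N).
Proof.
  split.
  - intros [c [Hc Hx]]. exists c. split; auto. lia.
  - intros [c [Hc Hx]]. exists c. split; auto. lia.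
Qed.

Theorem mainTheorem15 (d : nat) (a : nat -> Z) (N : Z) (M : Z -> Prop)
  (ha_pos : forall j, (j < d)%nat -> 0 < a j)
  (ha_gcd : zgcd d a = 1)
  (hN : 0 < N)
  (hM : maximal_frakM N d a M)
  (h0 : M 0)
  (i : Z) (hi : 0 <= i < N) :
  exists m, M m /\ m mod N = i.
Proof.
  destruct hM as [HfM Hmax].
  set (P := fun x => exists m, M m /\ sg d a (m - x - N)).
  destruct (sg_res d a N (- i) hN ha_gcd) as [s [Hs Hsm]].
  destruct (sg_res d a N i hN ha_gcd) as [z [Hz Hzm]].
  set (x0 := - N - s).
  assert (HP0 : P x0).
  { exists 0. split; auto. unfold x0. replace (0 - (- N - s) - N) with s by ring. exact Hs. }
  pose proof (sg_nonneg _ _ _ ha_pos Hs). pose proof (sg_nonneg _ _ _ ha_pos Hz).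
  assert (Hx0m : x0 mod N = i).
  { pose proof (Z.div_mod s N ltac:(lia)). pose proof (Z.div_mod (- i) N ltac:(lia)).
    unfold x0. replace (- N - s) with (i + (-1 - s / N + (- i) / N) * N).
    2:{ rewrite Hsm in *. set (q1 := s / N) in *. set (q2 := (- i) / N) in *.
        set (r := (- i) mod N) in *. rewrite H1. assert (Hr : r = - i - N * q2) by (rewrite H2; ring). rewrite Hr. ring. }
    rewrite Z.mod_add by lia. apply Z.mod_small; lia. }
  assert (Hdiv : (z - x0) mod N = 0).
  { rewrite Zminus_mod, Hzm, Hx0m, (Z.mod_small i N) by lia. rewrite Z.sub_diag. reflexivity. }
  set (T := (z - x0) / N).
  assert (HT : z = x0 + T * N).
  { pose proof (Z.div_mod (z - x0) N ltac:(lia)). unfold T. lia. }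
  assert (HT0 : 0 <= T).
  { unfold T. apply Z.div_pos; unfold x0; lia. }
  assert (HnP : ~ P (x0 + Z.of_nat (Z.to_nat T) * N)).
  { rewrite Z2Nat.id by lia. rewrite <- HT. intros [m [Hm Hsg]].
    apply (HfM m 0 Hm h0). left. apply Splus_sg.
    replace (m - 0 - N) with (z + (m - z - N)) by ring. apply sg_add; auto. }
  destruct (transition P x0 N _ HP0 HnP) as [t [[m0 [Hm0 Hsg0]] HnP1]].
  set (y := x0 + (t + 1) * N) in *.
  assert (Hy : M y).
  { apply (Hmax (fun w => M w \/ w = y)); [| intros; left; auto | right; auto].
    assert (Hl : forall m, M m -> ~ S_plus N d a (y - m)).
    { intros m Hm HS. apply Splus_sg in HS. apply (HfM m0 m Hm0 Hm). left. apply Splus_sg.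
      replace (m0 - m - N) with ((m0 - (x0 + t * N) - N) + (y - m - N)) by (unfold y; ring).
      apply sg_add; auto. }
    assert (Hr : forall m, M m -> ~ S_plus N d a (m - y)).
    { intros m Hm HS. apply Splus_sg in HS. apply HnP1. exists m. split; auto. }
    assert (Hself : ~ S_set N d a (y - y)).
    { rewrite Z.sub_diag. intros [HS | HS]; unfold S_minus in HS; apply Splus_sg in HS;
      apply sg_nonneg in HS; auto; lia. }
    intros u v [Hu | ->] [Hv | ->].
    - apply HfM; auto.
    - intros [HS | HS]; [apply (Hr u Hu) | apply (Hl u Hu)]; auto.
      unfold S_minus in HS. replace (y - u) with (- (u - y)) by ring. auto.
    - intros [HS | HS]; [apply (Hl v Hv) | apply (Hr v Hv)]; auto.
      unfold S_minus in HS. replace (v - y) with (- (y - v)) by ring. auto.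
    - auto. }
  exists y. split; auto. unfold y.
  rewrite Z.mod_add by lia. exact Hx0m.
Qed.
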